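(* Let $G$ be a connected bipartite graph with color classes $E$ (emerald) and $V$ (violet), and fix a triangulation $\mathscr T$ of the root polytope $Q_G$. Let $\Sigma$ be a cycle-free subgraph of $G$ (with vertex set $E\cup V$) such that the corresponding simplex $\sigma\subset Q_G$ is an interior face of $\mathscr T$, and let $C$ be a connected component of $\Sigma$. Then there is a unique maximal simplex of $\mathscr T$ containing $\sigma$ such that in the corresponding spanning tree $\Gamma_C\supset\Sigma$, every edge of $\Gamma_C\setminus\Sigma$ has its violet endpoint facing $C$.
   Context: $Q_G\subset\mathbf R^E\oplus\mathbf R^V$ is the convex hull of $\mathbf i_{\{e\}}+\mathbf i_{\{v\}}$ over edges $ev$ of $G$. The simplex corresponding to a cycle-free set of edges is the convex hull of the corresponding vertices of $Q_G$ (these are affinely independent exactly when the edge set is cycle-free); maximal simplices correspond to spanning trees. A triangulation is a collection of full-dimensional such simplices pairwise meeting in common faces with union $Q_G$; its faces are the faces of these simplices, and a face is interior if it is not contained in the boundary of $Q_G$. For a tree $\Gamma$ containing a connected subgraph $C$ and an edge $\varepsilon\in\Gamma\setminus C$, the endpoint of $\varepsilon$ closer to $C$ in $\Gamma$ is said to face $C$. *)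

(* Defs.v *)
From mathcomp Require Import all_boot all_order all_algebra.
From mathcomp Require Import reals.
Set Implicit Arguments. Unset Strict Implicit. Unset Printing Implicit Defensive.
Import Order.TTheory GRing.Theory Num.Theory.
Local Open Scope ring_scope.

Section RootPolytope.
Variables (E V : finType).

(* A bipartite graph with colour classes E (emerald) and V (violet) is given by
   its edge set, a subset of E * V; subgraphs are subsets of it.
   Vertices of the graph are the elements of E + V. *)
Definition sadj (S : {set E * V}) : rel (E + V) :=
  fun x y => match x, y with
             | inl e, inr v => (e, v) \in S
             | inr v, inl e => (e, v) \in S
             | _, _ => false
             end.

Definition gconnected (S : {set E * V}) : Prop :=
  forall x y : E + V, connect (sadj S) x y.

Definition has_cycle (S : {set E * V}) : Prop :=
  exists c : seq (E + V), [/\ uniq c, (3 <= size c)%N & cycle (sadj S) c].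

Definition cycle_free (S : {set E * V}) : Prop := ~ has_cycle S.

Definition spanning_tree (G S : {set E * V}) : Prop :=
  [/\ S \subset G, cycle_free S & gconnected S].

Definition component (S : {set E * V}) (C : {set E + V}) : Prop :=
  exists x : E + V, C = [set y | connect (sadj S) x y].

Definition within (S : {set E * V}) (C : {set E + V}) (x : E + V) (n : nat) : Prop :=
  exists p : seq (E + V), [/\ path (sadj S) x p, last x p \in C & (size p <= n)%N].

Definition closer (S : {set E * V}) (C : {set E + V}) (x y : E + V) : Prop :=
  exists n : nat, within S C x n /\ ~ within S C y n.

Variable R : realType.

(* points of R^E (+) R^V are functions E + V -> R *)
Definition vpoint (a : E * V) : E + V -> R :=
  fun z => (z == inl a.1)%:R + (z == inr a.2)%:R.

(* convex hull of the points i_e + i_v, (e,v) in S: the simplex of S when S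
   is cycle-free, and the root polytope Q_G when S = G *)
Definition conv (S : {set E * V}) (x : E + V -> R) : Prop :=
  exists lam : E * V -> R,
    [/\ forall a, 0 <= lam a, forall a, a \notin S -> lam a = 0,
        \sum_a lam a = 1 & forall z, x z = \sum_a lam a * vpoint a z].

Definition aff (G : {set E * V}) (x : E + V -> R) : Prop :=
  exists mu : E * V -> R,
    [/\ forall a, a \notin G -> mu a = 0,
        \sum_a mu a = 1 & forall z, x z = \sum_a mu a * vpoint a z].

Definition relint (G : {set E * V}) (x : E + V -> R) : Prop :=
  conv G x /\ exists eps : R, 0 < eps /\
    forall y, aff G y -> (forall z, `|y z - x z| < eps) -> conv G y.

Definition boundary (G : {set E * V}) (x : E + V -> R) : Prop :=
  conv G x /\ ~ relint G x.

(* a triangulation of Q_G, given by the spanning trees of its maximal simplices *)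
Definition triangulation (G : {set E * V}) (T : {set {set E * V}}) : Prop :=
  [/\ forall t, t \in T -> spanning_tree G t,
      forall t1 t2, t1 \in T -> t2 \in T ->
        exists S : {set E * V}, [/\ S \subset t1, S \subset t2 &
          forall x, (conv t1 x /\ conv t2 x) <-> conv S x]
    & forall x, conv G x <-> exists2 t, t \in T & conv t x].

Definition face_of (T : {set {set E * V}}) (S : {set E * V}) : Prop :=
  exists2 t, t \in T & S \subset t.

Definition interior_simplex (G S : {set E * V}) : Prop :=
  ~ (forall x, conv S x -> boundary G x).

End RootPolytope.

(* Main.v *)
Require Import Defs.
From mathcomp Require Import all_boot all_order all_algebra.
From mathcomp Require Import reals.
From mathcomp Require Import ring lra zify.
From Stdlib Require Import Classical.
Set Implicit Arguments. Unset Strict Implicit. Unset Printing Implicit Defensive.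
Import Order.TTheory GRing.Theory Num.Theory.
Local Open Scope ring_scope.
Lemma sadj_sym (E V : finType) (S : {set E * V}) : symmetric (sadj S).
Proof. by case=> [e|v] [e'|v']. Qed.

Lemma sadj_sub (E V : finType) (S S' : {set E * V}) :
  S \subset S' -> subrel (sadj S) (sadj S').
Proof. by move=> /subsetP sub [e|v] [e'|v'] //= /sub. Qed.

Lemma connect_subS (E V : finType) (S S' : {set E * V}) :
  S \subset S' -> subrel (connect (sadj S)) (connect (sadj S')).
Proof. by move=> sub; apply: connect_sub => x y /(sadj_sub sub)/connect1. Qed.

Lemma csym (E V : finType) (S : {set E * V}) x y :
  connect (sadj S) x y = connect (sadj S) y x.
Proof. exact: (sym_connect_sym (sadj_sym S)). Qed.

Definition cut (E V : finType) (Gam : {set E * V}) (a : E * V) : {set E + V} :=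
  [set y | connect (sadj (Gam :\ a)) (inl a.1) y].

Lemma cut_closed (E V : finType) (Gam : {set E * V}) a y z :
  sadj (Gam :\ a) y z -> (y \in cut Gam a) = (z \in cut Gam a).
Proof.
move=> yz; rewrite !inE; apply/idP/idP => h.
  exact: (connect_trans h (connect1 yz)).
by apply: (connect_trans h); apply: connect1; rewrite sadj_sym.
Qed.

Lemma cut_in (E V : finType) (Gam : {set E * V}) a : inl a.1 \in cut Gam a.
Proof. by rewrite inE connect0. Qed.

Lemma cut_out (E V : finType) (Gam : {set E * V}) a :
  cycle_free Gam -> a \in Gam -> inr a.2 \notin cut Gam a.
Proof.
case: a => e v cf aG /=; rewrite inE; apply/negP => /connectP [p pth lst].
move: lst; case: (shortenP pth) => p' pth' uq _ lst.
apply: cf; exists (inl e :: p'); split => //.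
- case: p' pth' uq lst => [|y [|y' p']] //=.
  rewrite andbT => yp _ yE; move: yp; rewrite -yE /=.
  by rewrite !inE eqxx.
- rewrite /= rcons_path (sub_path (@sadj_sub _ _ _ Gam _) pth') ?subD1set //=.
  by rewrite -lst.
Qed.

Lemma closed_vp (E V : finType) (S : {set E * V}) (A : {set E + V}) b :
  (forall y z, sadj S y z -> (y \in A) = (z \in A)) -> b \in S ->
  (inl b.1 \in A) = (inr b.2 \in A).
Proof. by case: b => e v h bS; apply: h. Qed.

Lemma edge_a (E V : finType) (Gam : {set E * V}) a x y :
  sadj Gam x y -> ~~ sadj (Gam :\ a) x y -> (y == inl a.1) || (y == inr a.2).
Proof.
case: a => e v; case: x => [e'|v']; case: y => [e''|v''] //= h;
  rewrite !inE h andbT negbK => /eqP [? ?]; subst; rewrite /= ?eqxx ?orbT //.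
Qed.

Lemma cross (E V : finType) (Gam : {set E * V}) a (X : {set E + V}) :
  (forall y z, sadj (Gam :\ a) y z -> (y \in X) = (z \in X)) ->
  forall p x, path (sadj Gam) x p -> x \notin X -> last x p \in X ->
  exists w q, [/\ w \in X, (w == inl a.1) || (w == inr a.2),
     path (sadj Gam) w q, last w q = last x p & (size q < size p)%N].
Proof.
move=> clX; elim=> [|y p IH] x /=; first by move=> _ /negPf ->.
move=> /andP [xy pth] xX lst.
case yX: (y \in X).
  exists y, p; split => //.
  apply: (edge_a xy); apply/negP => /clX; rewrite yX => h.
  by rewrite h in xX.
have [w [q [wX wa qp ql qs]]] := IH y pth (negbT yX) lst.
by exists w, q; split => //; apply: ltn_trans qs _.
Qed.

Lemma not_closer (E V : finType) (Gam : {set E * V}) a (C : {set E + V}) :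
  cycle_free Gam -> a \in Gam -> C \subset cut Gam a ->
  ~ closer Gam C (inr a.2) (inl a.1).
Proof.
move=> cf aG /subsetP CA [n [[p [pth lst sz]] nw]]; apply: nw.
have [w [q [wX wa qp ql qs]]] :=
  cross (@cut_closed _ _ Gam a) pth (cut_out cf aG) (CA _ lst).
have wE : w = inl a.1.
  case/orP: wa => /eqP // wE; move: wX; rewrite wE.
  by move: (cut_out cf aG) => /negPf ->.
exists q; split; first by rewrite -wE.
  by rewrite -wE ql.
lia.
Qed.

Lemma yes_closer (E V : finType) (Gam : {set E * V}) a (C : {set E + V}) c :
  cycle_free Gam -> gconnected Gam -> a \in Gam -> c \in C ->
  (forall y, y \in C -> y \notin cut Gam a) ->
  closer Gam C (inr a.2) (inl a.1).
Proof.
move=> cf gc aG cC CA.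
have clX : forall y z, sadj (Gam :\ a) y z -> (y \in ~: cut Gam a) = (z \in ~: cut Gam a).
  by move=> y z yz; rewrite !in_setC (cut_closed yz).
have key : forall n, within Gam C (inr a.2) n -> within Gam C (inl a.1) n ->
    within Gam C (inr a.2) n.-1 /\ (0 < n)%N.
  move=> n _ [p [pth lst sz]].
  have h1 : inl a.1 \notin ~: cut Gam a by rewrite inE negbK cut_in.
  have h2 : last (inl a.1) p \in ~: cut Gam a by rewrite inE CA.
  have [w [q [wX wa qp ql qs]]] := cross clX pth h1 h2.
  have wE : w = inr a.2.
    case/orP: wa => /eqP // wE; move: wX; rewrite wE inE cut_in //.
  split; last by lia.
  exists q; split; first by rewrite -wE.
    by rewrite -wE ql.
  lia.
suff: forall n, within Gam C (inr a.2) n -> closer Gam C (inr a.2) (inl a.1).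
  move: (gc (inr a.2) c) => /connectP [p pth lst] /(_ (size p)); apply.
  by exists p; split => //; rewrite -lst.
elim/ltn_ind => n IH wv.
case: (classic (within Gam C (inl a.1) n)) => we; last by exists n.
have [wv' np] := key n wv we.
by apply: (IH n.-1) => //; lia.
Qed.
Definition sg (E V : finType) (R : realType) (y : E + V) : R :=
  if y is inl _ then 1 else -1.

Definition rep (E V : finType) (R : realType) (lam : E * V -> R) (z : E + V) : R :=
  \sum_a lam a * vpoint R a z.

Definition phi (E V : finType) (R : realType) (A : {set E + V}) (x : E + V -> R) : R :=
  \sum_(y in A) sg R y * x y.

Definition supp (E V : finType) (R : realType) (lam : E * V -> R) (S : {set E * V}) :=
  forall b, b \notin S -> lam b = 0.

Lemma rep_lin (E V : finType) (R : realType) (l1 l2 : E * V -> R) k1 k2 z :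
  rep (fun a => k1 * l1 a + k2 * l2 a) z = k1 * rep l1 z + k2 * rep l2 z.
Proof.
rewrite /rep !mulr_sumr -big_split /=; apply: eq_bigr => a _; ring.
Qed.

Lemma phi_ext (E V : finType) (R : realType) A (x y : E + V -> R) :
  (forall z, x z = y z) -> phi A x = phi A y.
Proof. by move=> h; apply: eq_bigr => z _; rewrite h. Qed.

Lemma phi_lin (E V : finType) (R : realType) A (x y : E + V -> R) k1 k2 :
  phi A (fun z => k1 * x z + k2 * y z) = k1 * phi A x + k2 * phi A y.
Proof.
rewrite /phi !mulr_sumr -big_split /=; apply: eq_bigr => a _; ring.
Qed.

Lemma phi_rep (E V : finType) (R : realType) A (lam : E * V -> R) :
  phi A (rep lam) = \sum_a lam a * phi A (vpoint R a).
Proof.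
rewrite /phi /rep.
under eq_bigr do rewrite mulr_sumr.
rewrite exchange_big /=; apply: eq_bigr => a _.
rewrite mulr_sumr; apply: eq_bigr => y _; ring.
Qed.

Lemma sum_ind (T : finType) (R : realType) (A : {set T}) (f : T -> R) z :
  \sum_(y in A) f y * (y == z)%:R = (z \in A)%:R * f z.
Proof.
case: (boolP (z \in A)) => zA.
  rewrite (bigD1 z) //= eqxx mulr1 big1 ?addr0 ?mul1r // => y /andP [_ /negPf ->].
  by rewrite mulr0.
rewrite big1 ?mul0r // => y yA; have /negPf -> : y != z.
  by apply/eqP => yz; rewrite -yz yA in zA.
by rewrite mulr0.
Qed.

Lemma sum_ind_all (T : finType) (R : realType) (f : T -> R) z :
  \sum_y f y * (y == z)%:R = f z.
Proof.
rewrite (bigD1 z) //= eqxx mulr1 big1 ?addr0 // => y /negPf ->.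
by rewrite mulr0.
Qed.

Lemma sum_card (T : finType) (R : realType) (A : {set T}) :
  \sum_y ((y \in A)%:R : R) = #|A|%:R.
Proof.
have <- : \sum_(y in A) (1 : R) = #|A|%:R by rewrite sumr_const.
by rewrite [RHS]big_mkcond; apply: eq_bigr => y _; case: (y \in A).
Qed.

Lemma phi_vpoint (E V : finType) (R : realType) A (b : E * V) :
  phi A (vpoint R b) = (inl b.1 \in A)%:R - (inr b.2 \in A)%:R.
Proof.
rewrite /phi /vpoint.
under eq_bigr do rewrite mulrDr.
rewrite big_split /= !sum_ind /=; ring.
Qed.
Lemma coef_cut (E V : finType) (R : realType) (Gam : {set E * V}) a (lam : E * V -> R) :
  cycle_free Gam -> a \in Gam -> supp lam Gam -> phi (cut Gam a) (rep lam) = lam a.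
Proof.
move=> cf aG sl; rewrite phi_rep (bigD1 a) //= phi_vpoint cut_in.
rewrite (negbTE (cut_out cf aG)) big1 ?addr0; first by rewrite /=; ring.
move=> b ba; case: (boolP (b \in Gam)) => bG; last by rewrite sl // mul0r.
rewrite phi_vpoint (@closed_vp _ _ (Gam :\ a) (cut Gam a) b) ?subrr ?mulr0 //.
  exact: cut_closed.
by rewrite in_setD1 ba.
Qed.

Lemma rep_uniq (E V : finType) (R : realType) (Gam : {set E * V}) (lam mu : E * V -> R) :
  cycle_free Gam -> supp lam Gam -> supp mu Gam ->
  (forall z, rep lam z = rep mu z) -> forall b, lam b = mu b.
Proof.
move=> cf sl sm h b; case: (boolP (b \in Gam)) => bG; last by rewrite sl ?sm.
by rewrite -(coef_cut cf bG sl) -(coef_cut cf bG sm); apply: phi_ext.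
Qed.

Definition Ach (E V : finType) (R : realType) (H : {set E * V}) (d : E + V -> R) :=
  exists nu, supp nu H /\ forall z, d z = rep nu z.

Lemma Ach_ext (E V : finType) (R : realType) H (d d' : E + V -> R) :
  (forall z, d z = d' z) -> Ach H d -> Ach H d'.
Proof. by move=> e [nu [s h]]; exists nu; split => // z; rewrite -e. Qed.

Lemma Ach_lin (E V : finType) (R : realType) H (d d' : E + V -> R) k1 k2 :
  Ach H d -> Ach H d' -> Ach H (fun z => k1 * d z + k2 * d' z).
Proof.
move=> [nu [s h]] [nu' [s' h']]; exists (fun a => k1 * nu a + k2 * nu' a); split.
  by move=> b bH; rewrite s ?s' // !mulr0 addr0.
by move=> z; rewrite rep_lin h h'.
Qed.

Lemma Ach0 (E V : finType) (R : realType) H :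
  Ach H (fun _ : E + V => (0 : R)).
Proof.
exists (fun _ => 0); split => // z; rewrite /rep big1 // => a _; exact: mul0r.
Qed.

Lemma Ach_sum (E V : finType) (R : realType) H (I : finType) (F : I -> E + V -> R) :
  (forall i, Ach H (F i)) -> Ach H (fun z => \sum_i F i z).
Proof.
move=> h; elim: (index_enum I) => [|i r IH].
  by apply: (Ach_ext _ (Ach0 R H)) => z; rewrite big_nil.
apply: (Ach_ext _ (Ach_lin 1 1 (h i) IH)) => z.
by rewrite big_cons !mul1r.
Qed.

Definition dv (E V : finType) (R : realType) (c z y : E + V) : R :=
  sg R y * ((y == z)%:R - (y == c)%:R).

Lemma vp_dv (E V : finType) (R : realType) (e : E) (v : V) y :
  vpoint R (e, v) y = dv R (inr v) (inl e) y.
Proof. by rewrite /vpoint /dv; case: y => u /=; ring. Qed.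

Lemma Ach_vp (E V : finType) (R : realType) (H : {set E * V}) b :
  b \in H -> Ach H (vpoint R b).
Proof.
move=> bH; exists (fun a => (a == b)%:R); split.
  by move=> a aH; case: eqP => // ab; rewrite ab bH in aH.
move=> z; rewrite /rep (bigD1 b) //= eqxx mul1r big1 ?addr0 // => a /negPf ->.
exact: mul0r.
Qed.

Lemma Ach_dv (E V : finType) (R : realType) (H : {set E * V}) c z :
  connect (sadj H) c z -> Ach H (dv R c z).
Proof.
move/connectP => [p pth ->]; elim/last_ind: p pth => [|p x IH].
  move=> _; apply: (Ach_ext _ (Ach0 R H)) => y; rewrite /dv /=; ring.
rewrite rcons_path last_rcons => /andP [/IH Ap ex].
have step : forall y, dv R c x y = 1 * dv R c (last c p) y + 1 * dv R (last c p) x y.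
  by move=> y; rewrite /dv; ring.
move: ex step; case: (last c p) Ap => [e'|v']; case: x => [e''|v''] //= Ap ex step.
  apply: (Ach_ext _ (Ach_lin 1 (-1) Ap (Ach_vp R ex))) => y.
  by rewrite step vp_dv /dv; ring.
apply: (Ach_ext _ (Ach_lin 1 1 Ap (Ach_vp R ex))) => y.
by rewrite step vp_dv.
Qed.

Lemma span (E V : finType) (R : realType) (Gam : {set E * V}) (lam : E * V -> R) :
  gconnected Gam -> exists kap, supp kap Gam /\ forall z, rep kap z = rep lam z.
Proof.
move=> gc.
have : Ach Gam (rep lam).
  apply: (@Ach_sum _ _ _ _ _ (fun a z => lam a * vpoint R a z)) => a.
  case: a => e v.
  apply: (Ach_ext _ (Ach_lin (lam (e, v)) 0 (Ach_dv R (gc (inr v) (inl e))) (Ach0 R Gam))) => y.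
  by rewrite vp_dv mulr0 addr0.
by move=> [nu [s h]]; exists nu; split => // z; rewrite h.
Qed.

Lemma sum_coef (E V : finType) (R : realType) (lam : E * V -> R) :
  \sum_b lam b = \sum_e rep lam (inl e).
Proof.
rewrite /rep exchange_big /=; apply: eq_bigr => [[e v]] _ /=.
rewrite /vpoint /=.
under eq_bigr do rewrite addr0.
rewrite -mulr_sumr.
have -> : \sum_(i : E) ((i == e)%:R : R) = 1.
  by rewrite -[RHS](sum_ind_all (fun _ : E => (1 : R)) e); apply: eq_bigr => i _; rewrite mul1r.
by rewrite mulr1.
Qed.
Definition dsum (E V : finType) (R : realType) (c y : E + V) : R :=
  \sum_z dv R c z y.

Lemma sgsq (E V : finType) (R : realType) (y : E + V) : sg R y * sg R y = 1.
Proof. by case: y => u /=; rewrite ?mulr1 ?mulrNN ?mulr1. Qed.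

Lemma phi_dv (E V : finType) (R : realType) (A : {set E + V}) c z :
  phi A (dv R c z) = (z \in A)%:R - (c \in A)%:R.
Proof.
rewrite /phi /dv.
under eq_bigr => y _ do rewrite mulrA sgsq mul1r.
rewrite sumrB.
have h w : \sum_(y in A) ((y == w)%:R : R) = (w \in A)%:R.
  by rewrite -[RHS]mulr1 -(sum_ind A (fun _ => (1 : R))); apply: eq_bigr => *; rewrite mul1r.
by rewrite !h.
Qed.

Lemma phi_sum (E V : finType) (R : realType) (A : {set E + V}) (I : finType) (F : I -> E + V -> R) :
  phi A (fun y => \sum_i F i y) = \sum_i phi A (F i).
Proof.
rewrite /phi; under eq_bigr do rewrite mulr_sumr.
by rewrite exchange_big.
Qed.

Lemma phi_dsum_pos (E V : finType) (R : realType) (A : {set E + V}) c x :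
  x \in A -> c \notin A -> 0 < phi A (dsum R c).
Proof.
move=> xA cA; rewrite /dsum phi_sum.
under eq_bigr do rewrite phi_dv (negbTE cA) subr0.
rewrite (bigD1 x) //= xA /=.
have : 0 <= \sum_(i | i != x) ((i \in A)%:R : R) by apply: sumr_ge0 => i _; apply: ler0n.
rewrite ?mulr1n; lra.
Qed.

Lemma phi_dsum_neg (E V : finType) (R : realType) (A : {set E + V}) c x :
  x \notin A -> c \in A -> phi A (dsum R c) < 0.
Proof.
move=> xA cA; rewrite /dsum phi_sum.
under eq_bigr do rewrite phi_dv cA.
rewrite (bigD1 x) //= (negbTE xA) /=.
have : 0 <= - \sum_(i | i != x) ((i \in A)%:R - 1 : R).
  rewrite -sumrN; apply: sumr_ge0 => i _; case: (i \in A) => /=; rewrite ?mulr1n ?mulr0n; lra.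
rewrite ?mulr0n; lra.
Qed.

Lemma small_eps (R : realType) (I : finType) (al be : I -> R) :
  exists eps : R, 0 < eps /\ forall i, al i != 0 -> eps * `|be i| < `|al i|.
Proof.
suff: forall r : seq I, exists eps : R, 0 < eps /\
    forall i, i \in r -> al i != 0 -> eps * `|be i| < `|al i|.
  by move=> /(_ (enum I)) [eps [ep h]]; exists eps; split => // i; apply: h; rewrite mem_enum.
elim=> [|i r [eps [ep IH]]]; first by exists 1; split.
case: (boolP (al i == 0)) => ai0.
  exists eps; split => // j; rewrite in_cons => /orP [/eqP -> |]; first by rewrite ai0.
  exact: IH.
have alp : 0 < `|al i| by rewrite normr_gt0.
have bp : 0 < `|be i| + 1 by have := normr_ge0 (be i); lra.
set m := `|al i| / (`|be i| + 1).
have mp : 0 < m by apply: divr_gt0.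
exists (Num.min eps m); split; first by rewrite lt_min ep mp.
have le1 : Num.min eps m <= eps by rewrite ge_min lexx.
have le2 : Num.min eps m <= m by rewrite ge_min lexx orbT.
have pos : 0 < Num.min eps m by rewrite lt_min ep mp.
move=> j; rewrite in_cons => /orP [/eqP -> _|jr aj].
  move: le2; rewrite /m ler_pdivlMr // mulrDr mulr1; lra.
have := IH j jr aj; have := normr_ge0 (be j); nra.
Qed.
Lemma conv_sub (E V : finType) (R : realType) (S S' : {set E * V}) (x : E + V -> R) :
  S \subset S' -> conv S x -> conv S' x.
Proof.
move=> /subsetP sub [lam [h1 h2 h3 h4]]; exists lam; split => // a aS'.
apply: h2; apply/negP => aS; move: aS'; by rewrite (sub _ aS).
Qed.

Lemma sum_coefE (E V : finType) (R : realType) (lam : E * V -> R) x :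
  (forall z, x z = rep lam z) -> \sum_e x (inl e) = \sum_b lam b.
Proof. by move=> h; rewrite sum_coef; apply: eq_bigr => e _; rewrite h. Qed.

Lemma neg_lower (R : realType) (eps be : R) : 0 < eps -> - (eps * `|be|) <= eps * be.
Proof.
move=> ep; have := ler_norm (- be); rewrite normrN => h.
have := ler_wpM2l (ltW ep) h; lra.
Qed.

Lemma pos_upper (R : realType) (eps be : R) : 0 < eps -> eps * be <= eps * `|be|.
Proof. by move=> ep; have := ler_wpM2l (ltW ep) (ler_norm be). Qed.

Theorem lemma4p1 (R : realType) (E V : finType) (G : {set E * V})
    (T : {set {set E * V}}) (Sigma : {set E * V}) (C : {set E + V}) :
  gconnected G ->
  triangulation R G T ->
  Sigma \subset G -> cycle_free Sigma ->
  face_of T Sigma -> interior_simplex R G Sigma ->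
  component Sigma C ->
  exists! Gam : {set E * V},
    [/\ Gam \in T, Sigma \subset Gam &
        forall (e : E) (v : V), (e, v) \in Gam -> (e, v) \notin Sigma ->
          closer Gam C (inr v) (inl e)].
Proof.
move=> Gconn [Ttree Tint Tcov] SG Scf [G' G'T SG'] Sint [c Cdef].
have hx1 : exists x1 : E + V -> R, conv Sigma x1 /\ relint G x1.
  apply: NNPP => nH; apply: Sint => x cx; split; first exact: conv_sub SG cx.
  by move=> ri; apply: nH; exists x.
case: hx1 => x1 [[lam1 [l1ge l1s l1sum l1x]] [_ [eps1 [eps1p eps1h]]]].
have [bs bsS] : exists bs, bs \in Sigma.
  apply: NNPP => nb; move: l1sum; rewrite big1 => [/eqP|a _].
    by rewrite eq_sym oner_eq0.
  by apply: l1s; apply/negP => h; apply: nb; exists a.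
have bsG : bs \in G by apply: (subsetP SG).
have n0 : (0 < #|Sigma|)%N by apply/card_gt0P; exists bs.
have nR : 0 < (#|Sigma|%:R : R) by rewrite ltr0n.
pose beta (a : E * V) : R := (a \in Sigma)%:R / #|Sigma|%:R.
have beta_ge0 a : 0 <= beta a by apply: divr_ge0; rewrite ?ler0n // ltW.
have beta_s : supp beta Sigma by move=> a /negPf aS; rewrite /beta aS mul0r.
have beta_sum : \sum_a beta a = 1.
  by rewrite -mulr_suml sum_card divff // gt_eqF.
have beta_pos a : a \in Sigma -> 0 < beta a.
  by move=> aS; rewrite /beta aS mul1r invr_gt0.
pose lam0 (a : E * V) : R := 2^-1 * lam1 a + 2^-1 * beta a.
have lam0_s : supp lam0 Sigma by move=> a aS; rewrite /lam0 l1s // beta_s // !mulr0 addr0.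
have lam0_pos a : a \in Sigma -> 0 < lam0 a.
  by move=> aS; have := l1ge a; have := beta_pos a aS; rewrite /lam0; lra.
have lam0_ge0 a : 0 <= lam0 a.
  by have := l1ge a; have := beta_ge0 a; rewrite /lam0; lra.
have lam0_sum : \sum_a lam0 a = 1.
  by rewrite big_split /= -!mulr_sumr l1sum beta_sum; lra.
pose x0 := rep lam0.
have [nu [nuG nuD]] : Ach G (dsum R c).
  exact: (Ach_sum (fun z => Ach_dv R (Gconn c z))).
pose t := \sum_b nu b.
pose nu' (b : E * V) : R := 1 * nu b + (- t) * (b == bs)%:R.
have nu'_s : supp nu' G.
  move=> b bG; rewrite /nu' nuG //.
  have /negPf -> : b != bs by apply/eqP => bE; rewrite bE bsG in bG.
  by rewrite !mulr0 addr0.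
have nu'_sum : \sum_b nu' b = 0.
  rewrite big_split /= -mulr_sumr -/t.
  rewrite (sum_ind_all (fun _ => - t) bs); lra.
have phiD : forall A, phi A (rep nu') = phi A (dsum R c) - t * phi A (vpoint R bs).
  move=> A; rewrite (phi_ext _ (rep_lin nu (fun b => (b == bs)%:R) 1 (- t))) phi_lin.
  rewrite -(phi_ext _ nuD) phi_rep.
  have -> : \sum_a (a == bs)%:R * phi A (vpoint R a) = phi A (vpoint R bs).
    rewrite -(sum_ind_all (fun a => phi A (vpoint R a)) bs).
    by apply: eq_bigr => a _; rewrite mulrC.
  ring.
pose D := rep nu'.
pose al (i : ({set E * V} * (E * V)) + (E + V)) : R :=
  match i with inl p => phi (cut p.1 p.2) x0 | inr z => eps1 / 2 end.
pose be (i : ({set E * V} * (E * V)) + (E + V)) : R :=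
  match i with inl p => phi (cut p.1 p.2) D | inr z => D z end.
have [eps [ep hsmall]] := small_eps al be.
pose xe := rep (fun b => 1 * lam0 b + eps * nu' b).
have phi_xe : forall A, phi A xe = phi A x0 + eps * phi A D.
  by move=> A; rewrite (phi_ext _ (rep_lin lam0 nu' 1 eps)) phi_lin mul1r.
have xe_sum : \sum_e xe (inl e) = 1.
  rewrite (@sum_coefE _ _ _ (fun b => 1 * lam0 b + eps * nu' b)) //.
  by rewrite big_split /= -!mulr_sumr lam0_sum nu'_sum; lra.
have convG : conv G xe.
  pose mu (b : E * V) : R := 1 * lam1 b + (2 * eps) * nu' b.
  have affy : aff G (rep mu).
    exists mu; split => //.
      move=> b bG; rewrite /mu nu'_s // l1s ?mulr0 ?addr0 //.
      by apply/negP => bS; move: bG; rewrite (subsetP SG _ bS).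
    by rewrite big_split /= -!mulr_sumr l1sum nu'_sum; lra.
  have close : forall z, `|rep mu z - x1 z| < eps1.
    move=> z; rewrite (rep_lin lam1 nu' 1 (2 * eps)) l1x.
    have h := hsmall (inr z); rewrite /al /be in h.
    have e2 : eps1 / 2 != 0 by rewrite mulf_neq0 // ?gt_eqF // invr_gt0.
    have {}h := h e2; rewrite [`|eps1 / 2|]gtr0_norm ?divr_gt0 // in h.
    rewrite mul1r addrAC subrr add0r normrM [`|2 * eps|]gtr0_norm ?mulr_gt0 //.
    rewrite -/D; lra.
  have [lamy [lyge lys lysum lyx]] := eps1h _ affy close.
  exists (fun b => 2^-1 * lamy b + 2^-1 * beta b); split.
  - by move=> a; have := lyge a; have := beta_ge0 a; lra.
  - move=> a aG; rewrite lys // beta_s ?mulr0 ?addr0 //.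
    by apply/negP => aS; move: aG; rewrite (subsetP SG _ aS).
  - by rewrite big_split /= -!mulr_sumr lysum beta_sum; lra.
  - move=> z.
    have e2 : rep lamy z = 1 * rep lam1 z + (2 * eps) * D z :=
      etrans (esym (lyx z)) (rep_lin lam1 nu' 1 (2 * eps) z).
    have e5 : x0 z = 2^-1 * rep lam1 z + 2^-1 * rep beta z := rep_lin lam1 beta _ _ z.
    have e4 : xe z = 1 * x0 z + eps * D z := rep_lin lam0 nu' 1 eps z.
    have e1 := rep_lin lamy beta (2^-1) (2^-1) z.
    transitivity (rep (fun a => 2^-1 * lamy a + 2^-1 * beta a) z); last by [].
    rewrite e4 e1 e5 e2; lra.
have SsubH : forall (Gam : {set E * V}) (a : E * V), Sigma \subset Gam -> a \notin Sigma -> Sigma \subset Gam :\ a.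
  move=> Gam a SGam aS; apply/subsetP => b bS; rewrite in_setD1 (subsetP SGam _ bS) andbT.
  by apply/eqP => ba; move: aS; rewrite -ba bS.
have cutS : forall (Gam : {set E * V}) (a : E * V), Sigma \subset Gam -> a \notin Sigma ->
    forall y z, sadj Sigma y z -> (y \in cut Gam a) = (z \in cut Gam a).
  move=> Gam a SGam aS y z yz; apply: cut_closed.
  exact: (sadj_sub (SsubH _ _ SGam aS)).
have phiD' : forall (Gam : {set E * V}) (a : E * V), Sigma \subset Gam -> a \notin Sigma ->
    phi (cut Gam a) D = phi (cut Gam a) (dsum R c).
  move=> Gam a SGam aS; rewrite /D phiD phi_vpoint.
  by rewrite (closed_vp (cutS _ _ SGam aS) bsS) subrr mulr0 subr0.
have al0 : forall (Gam : {set E * V}) (a : E * V), cycle_free Gam -> Sigma \subset Gam -> a \in Gam ->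
    phi (cut Gam a) x0 = lam0 a.
  move=> Gam a cf SGam aG; apply: coef_cut => // b bG; apply: lam0_s.
  by apply/negP => bS; move: bG; rewrite (subsetP SGam _ bS).
have cC : c \in C by rewrite Cdef inE connect0.
have CinCut : forall (Gam : {set E * V}) (a : E * V), Sigma \subset Gam -> a \notin Sigma -> c \in cut Gam a ->
    C \subset cut Gam a.
  move=> Gam a SGam aS cA; apply/subsetP => y; rewrite Cdef !inE => cy.
  rewrite inE in cA; apply: (connect_trans cA).
  exact: (connect_subS (SsubH _ _ SGam aS)).
have CoutCut : forall (Gam : {set E * V}) (a : E * V), Sigma \subset Gam -> a \notin Sigma -> c \notin cut Gam a ->
    forall y, y \in C -> y \notin cut Gam a.
  move=> Gam a SGam aS cA y; rewrite Cdef !inE => cy; apply/negP => yA.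
  move: cA; rewrite inE => /negP; apply; apply: (connect_trans yA).
  by rewrite csym; exact: (connect_subS (SsubH _ _ SGam aS)).
pose valid (Gam : {set E * V}) := [/\ Gam \in T, Sigma \subset Gam &
        forall (e : E) (v : V), (e, v) \in Gam -> (e, v) \notin Sigma ->
          closer Gam C (inr v) (inl e)].
have sub12 : forall G1 G2 : {set E * V}, valid G1 -> valid G2 -> G1 \subset G2.
  have convx : forall Gam : {set E * V}, valid Gam -> exists kap, [/\ supp kap Gam,
      forall a, a \in Gam -> 0 < kap a, conv Gam xe & forall z, rep kap z = xe z].
    move=> Gam [GT SGam vGam]; have [_ cf gc] := Ttree _ GT.
    have [kap [ks kx]] := span (fun b => 1 * lam0 b + eps * nu' b) gc.
    have kpos : forall a, a \in Gam -> 0 < kap a.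
      move=> a aG; rewrite -(coef_cut cf aG ks) (phi_ext _ kx) phi_xe (al0 _ _ cf SGam aG).
      case: (boolP (a \in Sigma)) => aS.
        have lp := lam0_pos a aS.
        have h := hsmall (inl (Gam, a)); rewrite /al /be /= (al0 _ _ cf SGam aG) in h.
        have {}h := h (negbT (gt_eqF lp)); rewrite [`|lam0 a|]gtr0_norm // in h.
        have := neg_lower (phi (cut Gam a) D) ep; lra.
      rewrite lam0_s // add0r; apply: mulr_gt0 => //.
      rewrite phiD' //; case: a aG aS => e v aG aS.
      case: (boolP (c \in cut Gam (e, v))) => cA.
        by have := not_closer cf aG (CinCut _ _ SGam aS cA); have := vGam e v aG aS.
      exact: (phi_dsum_pos R (cut_in Gam (e, v)) cA).
    exists kap; split => //; exists kap; split.
    - by move=> a; case: (boolP (a \in Gam)) => aG; [apply: ltW; apply: kpos | rewrite ks].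
    - exact: ks.
    - by rewrite -(sum_coefE (fun z => esym (kx z))) xe_sum.
    - by move=> z; exact: (esym (kx z)).
  move=> G1 G2 v1 v2.
  have [k1 [k1s k1p k1c k1x]] := convx _ v1.
  have [k2 [k2s k2p k2c k2x]] := convx _ v2.
  case: v1 => [G1T SG1 _]; case: v2 => [G2T SG2 _].
  have [_ cf1 _] := Ttree _ G1T.
  have [S [S1 S2 Sx]] := Tint _ _ G1T G2T.
  have [lamS [lSge lSs lSsum lSx]] := (proj1 (Sx xe)) (conj k1c k2c).
  have lSs1 : supp lamS G1.
    move=> b bG; apply: lSs; apply/negP => bS; move: bG; by rewrite (subsetP S1 _ bS).
  have eqS := rep_uniq cf1 lSs1 k1s (fun z => etrans (esym (lSx z)) (esym (k1x z))).
  apply/subsetP => a aG1; apply: (subsetP S2); case: (boolP (a \in S)) => // aS.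
  by have := k1p a aG1; rewrite -eqS lSs // ltxx.
have [Gam GT cGam] := (proj1 (Tcov xe)) convG.
have [GamG cf gc] := Ttree _ GT.
case: cGam => kap [kge ks ksum kx].
have kapE : forall a, a \in Gam -> kap a = phi (cut Gam a) x0 + eps * phi (cut Gam a) D.
  move=> a aG; rewrite -(coef_cut cf aG ks) -phi_xe.
  by apply: phi_ext => z; rewrite kx.
have alge : forall a, a \in Gam -> 0 <= phi (cut Gam a) x0.
  move=> a aG; rewrite leNgt; apply/negP => aln.
  have h := hsmall (inl (Gam, a)); rewrite /al /be /= in h.
  have {}h := h (negbT (lt_eqF aln)); rewrite [`|phi (cut Gam a) x0|]ltr0_norm // in h.
  have := kge a; rewrite (kapE a aG).
  have := pos_upper (phi (cut Gam a) D) ep; lra.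
have [kap0 [k0s k0x]] := span lam0 gc.
have convx0 : conv Gam x0.
  exists kap0; split.
  - move=> a; case: (boolP (a \in Gam)) => aG; last by rewrite k0s.
    by rewrite -(coef_cut cf aG k0s) (phi_ext _ k0x); apply: alge.
  - exact: k0s.
  - by rewrite -(sum_coefE (fun z => esym (k0x z))) (sum_coefE (fun z => erefl (x0 z))).
  - by move=> z; exact: (esym (k0x z)).
have convx0' : conv G' x0.
  exists lam0; split => //.
  move=> b bG; apply: lam0_s; apply/negP => bS; move: bG; by rewrite (subsetP SG' _ bS).
have SGam : Sigma \subset Gam.
  have [_ cf' _] := Ttree _ G'T.
  have [S [S1 S2 Sx]] := Tint _ _ GT G'T.
  have [lamS [lSge lSs lSsum lSx]] := (proj1 (Sx x0)) (conj convx0 convx0').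
  have lSs1 : supp lamS G'.
    move=> b bG; apply: lSs; apply/negP => bS; move: bG; by rewrite (subsetP S2 _ bS).
  have l0s : supp lam0 G'.
    move=> b bG; apply: lam0_s; apply/negP => bS; move: bG; by rewrite (subsetP SG' _ bS).
  have eqS := rep_uniq cf' lSs1 l0s (fun z => esym (lSx z)).
  apply/subsetP => a aS; apply: (subsetP S1); case: (boolP (a \in S)) => // aS'.
  by have := lam0_pos a aS; rewrite -eqS lSs // ltxx.
have vGam : valid Gam.
  split => // e v aG aS.
  have := kge (e, v); rewrite (kapE _ aG) (al0 _ _ cf SGam aG) lam0_s // add0r.
  rewrite (phiD' _ _ SGam aS) => hk.
  have hd : 0 <= phi (cut Gam (e, v)) (dsum R c).
    by move: hk; rewrite pmulr_rge0.
  have cA : c \notin cut Gam (e, v).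
    apply/negP => cA; have := phi_dsum_neg R (cut_out cf aG) cA; lra.
  exact: (yes_closer cf gc aG cC (CoutCut _ _ SGam aS cA)).
exists Gam; split => // Gam2 v2.
by apply/eqP; rewrite eqEsubset !sub12.
Qed.
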